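(* Let $\mathcal G=(\mathcal V,\mathcal E,W)$ be a network with $n=|\mathcal V|$ nodes and out-degree vector $w$, let $h^-\le h^+$ in $\mathbb R^{\mathcal V}$ and $\mathcal H=\prod_i[h_i^-,h_i^+]$, and assume $\mathcal G$ is $\mathcal H$-robustly indecomposable. Then: (i) for every configuration $x\in\mathcal X$ there exists an $\mathcal H$-robust I-path of length at most $n$ from $x$ to some configuration in $\{\pm\mathbf 1\}$; in particular $\{\pm\mathbf 1\}$ is globally I-reachable for the coordination game with every external field $h\in\mathcal H$; (ii) if $w\ge h^+$ and $w\ge -h^-$ (i.e., the game is $\mathcal H$-robustly regular), then for every $h\in\mathcal H$ the set of equilibria is $\mathcal X^*_h=\{\pm\mathbf 1\}$ and it is globally I-stable; (iii) if for some $a\in\{\pm1\}$ one has $w\ge -a\,h^{-a}$ and $w\ngeq a\,h^{-a}$, then from every configuration $x\in\mathcal X$ there exists an $\mathcal H$-robust I-path to $a\mathbf 1$, and for every $h\in\mathcal H$ the set of equilibria is $\mathcal X^*_h=\{a\mathbf 1\}$ and it is globally BR-stable.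
   Context: A network is $\mathcal G=(\mathcal V,\mathcal E,W)$ with finite node set $\mathcal V$, links $\mathcal E\subseteq\mathcal V\times\mathcal V$, weight matrix $W\in\mathbb R_+^{\mathcal V\times\mathcal V}$ with zero diagonal, $W_{ij}>0$ iff $(i,j)\in\mathcal E$; for $\mathcal S\subseteq\mathcal V$, $w_i^{\mathcal S}=\sum_{j\in\mathcal S}W_{ij}$; $w=W\mathbf 1$. $\mathcal X=\{-1,+1\}^{\mathcal V}$. Componentwise order; $x\ngeq y$ means $x_i<y_i$ for some $i$. For $a=+1$ (resp. $-1$), $h^{-a}$ denotes $h^-$ (resp. $h^+$). $h$-indecomposable: for every partition $\mathcal V=\mathcal V^+\cup\mathcal V^-$ into two disjoint nonempty sets there exist $s\in\{-,+\}$ and $i\in\mathcal V^s$ with $w_i^{\mathcal V^s}+s\,h_i<w_i^{\mathcal V^{-s}}$ ($s\,h_i$ is $\pm h_i$ according to $s$, $-s$ is the opposite sign). $\mathcal G$ is $\mathcal H$-robustly indecomposable if it is $h$-indecomposable for every $h\in\mathcal H$. Coordination game with external field $h$: players $\mathcal V$, actions $\{\pm1\}$, utilities $u_i(x)=x_i(\sum_jW_{ij}x_j+h_i)$; equilibria $x^*$ with $x_i^*$ maximizing $u_i(\cdot,x^*_{-i})$, set $\mathcal X^*_h$. An admissible path of length $l\ge0$ is a sequence $x^{(0)},\dots,x^{(l)}$ with consecutive configurations differing exactly in the action of one player $i_k$; for a given $h$ it is an I-path if $u_{i_k}(x^{(k)})>u_{i_k}(x^{(k-1)})$ for all $k$,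 a BR-path if $\ge$ holds instead. An $\mathcal H$-robust I-path is an admissible path that is an I-path for the game with external field $h$ for every $h\in\mathcal H$. For $\alpha\in\{\mathrm I,\mathrm{BR}\}$, $\mathcal Y\subseteq\mathcal X$ is globally $\alpha$-reachable if from every $x$ there is an $\alpha$-path to some element of $\mathcal Y$, and globally $\alpha$-stable if in addition there is no $\alpha$-path from any $y\in\mathcal Y$ to any $z\notin\mathcal Y$. *)

(* Defs.v *)
From mathcomp Require Import all_boot all_order all_algebra.
Set Implicit Arguments. Unset Strict Implicit. Unset Printing Implicit Defensive.
Import Order.TTheory GRing.Theory Num.Theory.
Local Open Scope ring_scope.

Section Game.
Variables (R : realFieldType) (V : finType).

(* configurations x in {-1,+1}^V, encoded as booleans: true = +1, false = -1 *)
Definition config := {ffun V -> bool}.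
Definition act (b : bool) : R := if b then 1 else -1.

Definition wS (W : V -> V -> R) (i : V) (S : {set V}) : R := \sum_(j in S) W i j.
Definition wdeg (W : V -> V -> R) (i : V) : R := \sum_j W i j.

(* network: nonnegative weights with zero diagonal (links = positive weights) *)
Definition is_network (W : V -> V -> R) : Prop :=
  (forall i j, 0 <= W i j) /\ (forall i, W i i = 0).

(* h-indecomposability: A = V^+, ~: A = V^- *)
Definition h_indecomposable (W : V -> V -> R) (h : V -> R) : Prop :=
  forall A : {set V}, A != set0 -> ~: A != set0 ->
    (exists2 i, i \in A & wS W i A + h i < wS W i (~: A)) \/
    (exists2 i, i \in ~: A & wS W i (~: A) - h i < wS W i A).

Definition inH (hm hp h : V -> R) : Prop := forall i, hm i <= h i <= hp i.

Definition robustly_indecomposable (W : V -> V -> R) (hm hp : V -> R) : Prop :=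
  forall h, inH hm hp h -> h_indecomposable W h.

Definition util (W : V -> V -> R) (h : V -> R) (i : V) (x : config) : R :=
  act (x i) * (\sum_j W i j * act (x j) + h i).

Definition setc (x : config) (i : V) (b : bool) : config :=
  [ffun j => if j == i then b else x j].

Definition is_equilibrium (W : V -> V -> R) (h : V -> R) (x : config) : Prop :=
  forall i b, util W h i (setc x i b) <= util W h i x.

Definition equilibria (W : V -> V -> R) (h : V -> R) : {set config} :=
  [set x | [forall i, forall b, util W h i (setc x i b) <= util W h i x]].

Definition adj (i : V) (x y : config) : bool :=
  [forall j, (j != i) ==> (y j == x j)] && (y i != x i).

Definition Istep (W : V -> V -> R) (h : V -> R) : rel config :=
  fun x y => [exists i, adj i x y && (util W h i x < util W h i y)].
Definition BRstep (W : V -> V -> R) (h : V -> R) : rel config :=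
  fun x y => [exists i, adj i x y && (util W h i x <= util W h i y)].

(* the path x = x^(0), s_1, ..., s_l  (length l = size s) *)
Definition robust_Ipath (W : V -> V -> R) (hm hp : V -> R) (x : config)
  (s : seq config) : Prop :=
  forall h, inH hm hp h -> path (Istep W h) x s.

Definition globally_reachable (step : rel config) (Y : {set config}) : Prop :=
  forall x, exists s, path step x s /\ last x s \in Y.

Definition globally_stable (step : rel config) (Y : {set config}) : Prop :=
  globally_reachable step Y /\
  forall y s, y \in Y -> path step y s -> last y s \in Y.

Definition cst (b : bool) : config := [ffun _ => b].
Definition pm1 : {set config} := [set cst true; cst false].

End Game.

(* Main.v *)
Require Import Defs.
From mathcomp Require Import all_boot all_order all_algebra.
From mathcomp Require Import ring lra zify.
Set Implicit Arguments. Unset Strict Implicit. Unset Printing Implicit Defensive.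
Import Order.TTheory GRing.Theory Num.Theory.
Local Open Scope ring_scope.

Section Aux.
Variables (R : realFieldType) (V : finType) (W : V -> V -> R).
Hypothesis HW : is_network W.

Definition sx (x : config V) i : R := \sum_j W i j * act R (x j).
Definition cfg (X : {set V}) : config V := [ffun i => i \in X].

Lemma actN b : act R (~~ b) = - act R b.
Proof. by case: b; rewrite /act ?opprK. Qed.

Lemma act_le b c : (b ==> c) -> act R b <= act R c.
Proof. by case: b; case: c => //= _; rewrite /act; lra. Qed.

Lemma utilE h i (x : config V) : util W h i x = act R (x i) * (sx x i + h i).
Proof. by []. Qed.

Lemma sx_agree (x y : config V) j : (forall k, k != j -> y k = x k) -> sx y j = sx x j.
Proof.
move=> H; apply: eq_bigr => k _; case: (eqVneq k j) => [->|/H ->] //.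
by rewrite (proj2 HW) !mul0r.
Qed.

Lemma adj_util h j (x y : config V) : adj j x y -> util W h j y = - util W h j x.
Proof.
case/andP=> /forallP Hf Hne.
have Hy : y j = ~~ x j by move: Hne; case: (y j); case: (x j).
rewrite !utilE Hy actN (@sx_agree x y j) ?mulNr // => k Hk.
by apply/eqP; exact: (implyP (Hf k) Hk).
Qed.

Lemma util_setc h i (x : config V) b : util W h i (setc x i b) = act R b * (sx x i + h i).
Proof.
rewrite utilE ffunE eqxx (@sx_agree x) // => k Hk.
by rewrite ffunE (negbTE Hk).
Qed.

Lemma equilP h (x : config V) : x \in equilibria W h <-> forall i, 0 <= util W h i x.
Proof.
rewrite inE; split.
- move=> /forallP H i; have /forallP/(_ (~~ x i)) := H i.
  rewrite util_setc actN utilE mulNr; lra.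
- move=> H; apply/forallP=> i; apply/forallP=> b; rewrite util_setc.
  have := H i; rewrite utilE.
  case: (eqVneq b (x i)) => [->//|Hb].
  have -> : b = ~~ x i by move: Hb; case: b; case: (x i).
  rewrite actN mulNr; lra.
Qed.

Lemma sx_mono (X Y : {set V}) i : X \subset Y -> sx (cfg X) i <= sx (cfg Y) i.
Proof.
move=> /subsetP H; apply: ler_sum => j _; rewrite !ffunE.
apply: ler_wpM2l; first exact: (proj1 HW).
apply: act_le; apply/implyP; exact: H.
Qed.

Lemma sx_ge (x : config V) i : - wdeg W i <= sx x i.
Proof.
rewrite /wdeg -sumrN; apply: ler_sum => j _.
have := proj1 HW i j; case: (x j); rewrite /act; nra.
Qed.

Lemma sx_le (x : config V) i : sx x i <= wdeg W i.
Proof.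
apply: ler_sum => j _.
have := proj1 HW i j; case: (x j); rewrite /act; nra.
Qed.

Lemma sx_cstT i : sx (cst V true) i = wdeg W i.
Proof. by apply: eq_bigr => j _; rewrite ffunE /act mulr1. Qed.

Lemma sx_cstF i : sx (cst V false) i = - wdeg W i.
Proof. by rewrite /wdeg -sumrN; apply: eq_bigr => j _; rewrite ffunE /act mulrN1. Qed.

Lemma sx_cfg A i : sx (cfg A) i = wS W i A - wS W i (~: A).
Proof.
rewrite /sx (bigID (mem A)) /= /wS -sumrN; congr (_ + _).
  by apply: eq_bigr => j Hj; rewrite ffunE Hj /act mulr1.
apply: eq_big => [j|j Hj]; first by rewrite inE.
by rewrite ffunE (negbTE Hj) /act mulrN1.
Qed.

Lemma cfgK (x : config V) : cfg [set i | x i] = x.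
Proof. by apply/ffunP=> i; rewrite ffunE inE. Qed.

Lemma wdeg_ge0 i : 0 <= wdeg W i.
Proof. by apply: sumr_ge0 => j _; exact: (proj1 HW). Qed.

Lemma improver h (x : config V) : h_indecomposable W h -> (exists i, x i) -> (exists i, ~~ x i) ->
  exists i, util W h i x < 0.
Proof.
move=> Hind [i Hi] [j Hj].
have Hx := cfgK x; set A := [set i | x i] in Hx.
have HA : A != set0 by apply/set0Pn; exists i; rewrite inE.
have HcA : ~: A != set0 by apply/set0Pn; exists j; rewrite !inE.
case: (Hind A HA HcA) => [[k Hk Hlt]|[k Hk Hlt]]; exists k;
  rewrite utilE -Hx sx_cfg ffunE.
- rewrite Hk /act; lra.
- move: Hk; rewrite inE => /negbTE ->; rewrite /act; lra.
Qed.

Lemma Istep_intro h (x : config V) j y : adj j x y -> util W h j x < 0 -> Istep W h x y.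
Proof.
move=> Ha Hu; apply/existsP; exists j; rewrite Ha (adj_util h Ha) /=; lra.
Qed.

Lemma adj_up (X : {set V}) j : j \notin X -> adj j (cfg X) (cfg (j |: X)).
Proof.
move=> Hj; apply/andP; split.
  by apply/forallP=> k; apply/implyP=> Hk; rewrite !ffunE in_setU1 (negbTE Hk).
by rewrite !ffunE setU11 (negbTE Hj).
Qed.

Lemma adj_down (X : {set V}) j : j \in X -> adj j (cfg X) (cfg (X :\ j)).
Proof.
move=> Hj; apply/andP; split.
  by apply/forallP=> k; apply/implyP=> Hk; rewrite !ffunE in_setD1 Hk.
by rewrite !ffunE setD11 Hj.
Qed.

Lemma no_Istep_eq h (x : config V) s : x \in equilibria W h -> path (Istep W h) x s -> last x s = x.
Proof.
case: s => [//|y s] /equilP He /= /andP[/existsP[j /andP[Ha Hu]] _].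
exfalso; have := He j; rewrite (adj_util h Ha) in Hu; lra.
Qed.

Definition Db (hp : V -> R) (Y : {set V}) : bool :=
  [forall i in Y, 0 <= sx (cfg Y) i + hp i].

Lemma core hm hp (X : {set V}) : (forall i, hm i <= hp i) ->
  robustly_indecomposable W hm hp -> X != setT ->
  [exists Y : {set V}, [&& Y \subset X, Y != set0 & Db hp Y]] ->
  exists2 j, j \notin X & 0 < sx (cfg X) j + hm j.
Proof.
move=> Hhm Hri HX /existsP[Y0 HY0].
pose P := fun Y : {set V} => [&& Y \subset X, Y != set0 & Db hp Y].
case: (@arg_maxnP _ Y0 P (fun Y => #|Y|) HY0) => Z /and3P[HZX HZ0 HZD] Hmax.
pose hs := fun i => if i \in Z then hp i else hm i.
have HhsH : inH hm hp hs.
  by move=> i; rewrite /hs; case: (i \in Z); rewrite ?lexx ?Hhm.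
have HcZ : ~: Z != set0.
  apply: contra HX => /eqP H; rewrite -subTset -setC0 -H setCK //.
case: (Hri hs HhsH Z HZ0 HcZ) => [[i Hi Hlt]|[j Hj Hlt]].
  exfalso; move: HZD => /forallP/(_ i); rewrite Hi /= sx_cfg.
  move: Hlt; rewrite /hs Hi; lra.
have Hjn : j \notin Z by rewrite inE in Hj.
have Hpos : 0 < sx (cfg Z) j + hm j.
  by move: Hlt; rewrite sx_cfg /hs (negbTE Hjn); lra.
have HjX : j \notin X.
  apply/negP => HjX.
  have HP : P (j |: Z).
    apply/and3P; split.
    - by rewrite subUset sub1set HjX HZX.
    - by apply/set0Pn; exists j; rewrite setU11.
    - apply/forallP=> i; apply/implyP; rewrite in_setU1 => /orP[/eqP->|Hi].
      + have := sx_mono j (subsetUr [set j] Z); have := Hhm j; lra.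
      + move: HZD => /forallP/(_ i); rewrite Hi /=.
        have := sx_mono i (subsetUr [set j] Z); lra.
  have := Hmax _ HP; rewrite cardsU1 Hjn /=; lia.
exists j => //; have := sx_mono j HZX; lra.
Qed.

Lemma cfgT (X : {set V}) : #|~: X| = 0%N -> cfg X = cst V true.
Proof.
move=> H; apply/ffunP => i; rewrite !ffunE.
have : (i \in ~: X) = false by rewrite (cards0_eq H) inE.
by rewrite inE => /negbFE.
Qed.

Lemma cfg0 (X : {set V}) : #|X| = 0%N -> cfg X = cst V false.
Proof. by move=> H; apply/ffunP => i; rewrite !ffunE (cards0_eq H) inE. Qed.

Lemma up_path hm hp : (forall i, hm i <= hp i) ->
  robustly_indecomposable W hm hp -> forall n (X : {set V}), #|~: X| = n ->
  [exists Y : {set V}, [&& Y \subset X, Y != set0 & Db hp Y]] ->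
  exists s, size s = n /\ robust_Ipath W hm hp (cfg X) s /\
            last (cfg X) s = cst V true.
Proof.
move=> Hhm Hri; elim=> [|n IH] X Hn HY.
  by exists [::]; split => //; split => //; rewrite /= cfgT.
have HX : X != setT by apply/eqP => HX; rewrite HX setCT cards0 in Hn.
case: (core Hhm Hri HX HY) => j Hj Hpos.
have Hn' : #|~: (j |: X)| = n.
  have := cardsC X; have := cardsC (j |: X); rewrite cardsU1 Hj; lia.
have HY' : [exists Y : {set V}, [&& Y \subset j |: X, Y != set0 & Db hp Y]].
  case/existsP: HY => Y /and3P[H1 H2 H3]; apply/existsP; exists Y.
  by rewrite H2 H3 andbT (subset_trans H1) // subsetUr.
case: (IH _ Hn' HY') => s [Hs [Hr Hl]].
exists (cfg (j |: X) :: s); split; first by rewrite /= Hs.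
split => // h Hh /=; rewrite Hr // andbT.
apply: (Istep_intro (adj_up Hj)); rewrite utilE ffunE (negbTE Hj) /act.
have := Hh j; case/andP => H1 _; lra.
Qed.

Lemma down_path hp : forall n (X : {set V}), #|X| = n ->
  ~~ [exists Y : {set V}, [&& Y \subset X, Y != set0 & Db hp Y]] ->
  exists s, size s = n /\ (forall hm, robust_Ipath W hm hp (cfg X) s) /\
            last (cfg X) s = cst V false.
Proof.
elim=> [|n IH] X Hn HY.
  by exists [::]; split => //; split => //; rewrite /= cfg0.
have HX0 : X != set0 by apply/eqP => HX; rewrite HX cards0 in Hn.
have : ~~ Db hp X by apply: contra HY => HD; apply/existsP; exists X; rewrite subxx HX0 HD.
case/forallPn => i; rewrite negb_imply => /andP[Hi Hlt].
rewrite -ltNge in Hlt.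
have Hn' : #|X :\ i| = n by move: Hn; rewrite (cardsD1 i X) Hi; lia.
have HY' : ~~ [exists Y : {set V}, [&& Y \subset X :\ i, Y != set0 & Db hp Y]].
  apply: contra HY => /existsP[Y /and3P[H1 H2 H3]]; apply/existsP; exists Y.
  by rewrite H2 H3 andbT (subset_trans H1) // subD1set.
case: (IH _ Hn' HY') => s [Hs [Hr Hl]].
exists (cfg (X :\ i) :: s); split; first by rewrite /= Hs.
split => // hm h Hh /=; rewrite (Hr hm) // andbT.
apply: (Istep_intro (adj_down Hi)); rewrite utilE ffunE Hi /act.
have := Hh i; case/andP => _ H2; lra.
Qed.

Lemma part1 hm hp : (forall i, hm i <= hp i) -> robustly_indecomposable W hm hp ->
  forall x : config V, exists s, (size s <= #|V|)%N /\
       robust_Ipath W hm hp x s /\ last x s \in pm1 V.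
Proof.
move=> Hhm Hri x; rewrite -(cfgK x); set X := [set i | x i].
case: (boolP [exists Y : {set V}, [&& Y \subset X, Y != set0 & Db hp Y]]) => HY.
  case: (up_path Hhm Hri (erefl _) HY) => s [Hs [Hr Hl]]; exists s.
  rewrite Hs -(cardsC X) leq_addl; split => //; split => //.
  by rewrite Hl /pm1 !inE eqxx.
case: (down_path (erefl _) HY) => s [Hs [Hr Hl]]; exists s.
rewrite Hs -(cardsC X) leq_addr; split => //; split => //.
by rewrite Hl /pm1 !inE eqxx orbT.
Qed.

Lemma part2 hm hp : (forall i, hm i <= hp i) -> robustly_indecomposable W hm hp ->
  (forall i, hp i <= wdeg W i) -> (forall i, - hm i <= wdeg W i) ->
  forall h, inH hm hp h ->
     equilibria W h = pm1 V /\ globally_stable (Istep W h) (pm1 V).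
Proof.
move=> Hhm Hri Hw1 Hw2 h Hh.
have Heq : equilibria W h = pm1 V.
  apply/setP => x; apply/idP/idP.
    move/equilP => He.
    case: (boolP [exists i, x i]) => [/existsP Hx1|/existsPn Hx1].
      case: (boolP [exists i, ~~ x i]) => [/existsP Hx2|/existsPn Hx2].
        case: (improver (Hri h Hh) Hx1 Hx2) => i Hi.
        by have := He i; lra.
      have -> : x = cst V true by apply/ffunP => i; rewrite ffunE; have := Hx2 i; case: (x i).
      by rewrite /pm1 !inE eqxx.
    have -> : x = cst V false by apply/ffunP => i; rewrite ffunE; have := Hx1 i; case: (x i).
    by rewrite /pm1 !inE eqxx orbT.
  rewrite /pm1 in_set2 => /orP[/eqP->|/eqP->]; apply/equilP => i;
    rewrite utilE ffunE ?sx_cstT ?sx_cstF /act; have := Hh i; have := Hw1 i;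
    have := Hw2 i; case/andP: (Hh i); lra.
split => //; split.
  move=> x; case: (part1 Hhm Hri x) => s [_ [Hr Hl]]; exists s; split => //.
  exact: Hr.
move=> y s Hy Hp; have He : y \in equilibria W h by rewrite Heq.
by rewrite (no_Istep_eq He Hp).
Qed.

Lemma I_BR h : subrel (Istep W h) (BRstep W h).
Proof.
move=> x y /existsP[i /andP[Ha Hu]]; apply/existsP; exists i; rewrite Ha ltW //.
Qed.

Lemma part3T hm hp : (forall i, hm i <= hp i) -> robustly_indecomposable W hm hp ->
  (forall i, - hm i <= wdeg W i) -> (exists k, wdeg W k < hm k) ->
  (forall x : config V, exists s,
       robust_Ipath W hm hp x s /\ last x s = cst V true) /\
   (forall h, inH hm hp h ->
     equilibria W h = [set cst V true] /\
     globally_stable (BRstep W h) [set cst V true]).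
Proof.
move=> Hhm Hri Hw [k Hk].
have Hk' : forall (x : config V) h, inH hm hp h -> x k = false -> util W h k x < 0.
  move=> x h Hh Hx; rewrite utilE Hx /act; have := sx_ge x k.
  case/andP: (Hh k); lra.
have HDk : Db hp [set k].
  apply/forallP => i; apply/implyP; rewrite inE => /eqP ->.
  have := sx_ge (cfg [set k]) k; have := Hhm k; lra.
have Hstrict : forall i, 0 < wdeg W i + hm i.
  move=> i; rewrite ltNge; apply/negP => Hle.
  have Hik : i != k by apply/eqP => E; subst i; have := wdeg_ge0 k; lra.
  have HX : [set~ i] != setT.
    by apply/eqP => E; have := in_setT i; rewrite -E !inE eqxx.
  have HY : [exists Y : {set V}, [&& Y \subset [set~ i], Y != set0 & Db hp Y]].
    apply/existsP; exists [set k]; rewrite sub1set !inE eq_sym Hik HDk andbT /=.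
    by apply/set0Pn; exists k; rewrite inE.
  case: (core Hhm Hri HX HY) => j; rewrite !inE negbK => /eqP -> Hpos.
  have := sx_le (cfg [set~ i]) i; lra.
have Hpaths : forall x : config V, exists s,
       robust_Ipath W hm hp x s /\ last x s = cst V true.
  have Hup : forall X : {set V}, k \in X -> exists s,
       robust_Ipath W hm hp (cfg X) s /\ last (cfg X) s = cst V true.
    move=> X HkX.
    have HY : [exists Y : {set V}, [&& Y \subset X, Y != set0 & Db hp Y]].
      apply/existsP; exists [set k]; rewrite sub1set HkX HDk andbT /=.
      by apply/set0Pn; exists k; rewrite inE.
    by case: (up_path Hhm Hri (erefl _) HY) => s [_ H]; exists s.
  move=> x; rewrite -(cfgK x); set X := [set i | x i].
  case: (boolP (k \in X)) => HkX; first exact: Hup.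
  case: (Hup (k |: X) (setU11 k X)) => s [Hr Hl].
  exists (cfg (k |: X) :: s); split => // h Hh /=; rewrite Hr // andbT.
  apply: (Istep_intro (adj_up HkX)); apply: Hk' => //.
  by rewrite ffunE (negbTE HkX).
split => // h Hh.
have Heq : equilibria W h = [set cst V true].
  apply/setP => x; apply/idP/idP.
    move/equilP => He.
    have Hxk : x k by apply/negPn/negP => /negbTE Hx; have := He k; have := Hk' x h Hh Hx; lra.
    case: (boolP [exists i, ~~ x i]) => [/existsP Hx2|/existsPn Hx2].
      case: (improver (Hri h Hh) (ex_intro _ k Hxk) Hx2) => i Hi.
      by have := He i; lra.
    have -> : x = cst V true by apply/ffunP => i; rewrite ffunE; have := Hx2 i; case: (x i).
    by rewrite !inE.
  rewrite in_set1 => /eqP->; apply/equilP => i.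
  rewrite utilE ffunE sx_cstT /act; have := Hw i; case/andP: (Hh i); lra.
split => //; split.
  move=> x; case: (Hpaths x) => s [Hr Hl]; exists s; split; last by rewrite Hl inE.
  exact: (sub_path (@I_BR h) (Hr h Hh)).
move=> y [|z s] Hy //=; rewrite inE in Hy; rewrite (eqP Hy).
case/andP => /existsP[j /andP[Ha Hu]] _; exfalso.
move: Hu; rewrite (adj_util h Ha) utilE ffunE sx_cstT /act.
have := Hstrict j; case/andP: (Hh j); lra.
Qed.

Definition negc (x : config V) : config V := [ffun i => ~~ x i].

Lemma negcK (x : config V) : negc (negc x) = x.
Proof. by apply/ffunP => i; rewrite !ffunE negbK. Qed.

Lemma negc_cst b : negc (cst V b) = cst V (~~ b).
Proof. by apply/ffunP => i; rewrite !ffunE. Qed.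

Lemma sx_negc (x : config V) i : sx (negc x) i = - sx x i.
Proof. by rewrite /sx -sumrN; apply: eq_bigr => j _; rewrite ffunE actN mulrN. Qed.

Lemma util_negc h i (x : config V) : util W (fun j => - h j) i (negc x) = util W h i x.
Proof. rewrite !utilE sx_negc ffunE actN; ring. Qed.

Lemma util_negc' h i (x : config V) : util W h i (negc x) = util W (fun j => - h j) i x.
Proof. rewrite !utilE sx_negc ffunE actN; ring. Qed.

Lemma adj_negc j (x y : config V) : adj j x y -> adj j (negc x) (negc y).
Proof.
case/andP => /forallP H1 H2; apply/andP; split; last by rewrite !ffunE; move: H2; case: (x j); case: (y j).
apply/forallP => k; apply/implyP => Hk; rewrite !ffunE.
by have := implyP (H1 k) Hk; case: (x k); case: (y k).
Qed.

Lemma path_negc h (x : config V) s : path (Istep W (fun j => - h j)) x s ->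
  path (Istep W h) (negc x) (map negc s).
Proof.
elim: s x => [//|y s IH] x /= /andP[/existsP[j /andP[Ha Hu]] Hp].
rewrite IH // andbT; apply/existsP; exists j; rewrite adj_negc //=.
by rewrite !util_negc'.
Qed.

Lemma BRpath_negc h (x : config V) s : path (BRstep W h) x s ->
  path (BRstep W (fun j => - h j)) (negc x) (map negc s).
Proof.
elim: s x => [//|y s IH] x /= /andP[/existsP[j /andP[Ha Hu]] Hp].
rewrite IH // andbT; apply/existsP; exists j; rewrite adj_negc //=.
by rewrite !util_negc.
Qed.

Lemma h_indec_neg h : h_indecomposable W (fun i => - h i) -> h_indecomposable W h.
Proof.
move=> H A HA HcA.
have HA' : ~: ~: A != set0 by rewrite setCK.
case: (H _ HcA HA') => [[i Hi Hlt]|[i Hi Hlt]].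
  by right; exists i => //; move: Hlt; rewrite setCK; lra.
by left; [exists i; rewrite setCK in Hi => //]; move: Hlt; rewrite setCK; lra.
Qed.

Lemma part3F hm hp : (forall i, hm i <= hp i) -> robustly_indecomposable W hm hp ->
  (forall i, hp i <= wdeg W i) -> (exists k, wdeg W k < - hp k) ->
  (forall x : config V, exists s,
       robust_Ipath W hm hp x s /\ last x s = cst V false) /\
   (forall h, inH hm hp h ->
     equilibria W h = [set cst V false] /\
     globally_stable (BRstep W h) [set cst V false]).
Proof.
move=> Hhm Hri Hw [k Hk].
have Hhm' : forall i, (fun j => - hp j) i <= (fun j => - hm j) i.
  by move=> i /=; rewrite lerN2.
have HH : forall h, inH hm hp h -> inH (fun j => - hp j) (fun j => - hm j) (fun j => - h j).
  by move=> h Hh i /=; rewrite !lerN2 andbC.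
have Hri' : robustly_indecomposable W (fun j => - hp j) (fun j => - hm j).
  move=> h' Hh'; apply: h_indec_neg; apply: Hri => i /=.
  by move: (Hh' i) => /=; rewrite -(lerN2 (hp i)) -(lerN2 _ (hm i)) opprK andbC.
have Hw' : forall i, - (fun j => - hp j) i <= wdeg W i by move=> i /=; rewrite opprK.
have Hk' : exists k, wdeg W k < (fun j => - hp j) k by exists k.
case: (part3T Hhm' Hri' Hw' Hk') => Hp He.
have Hpaths : forall x : config V, exists s,
       robust_Ipath W hm hp x s /\ last x s = cst V false.
  move=> x; case: (Hp (negc x)) => s [Hr Hl]; exists (map negc s); split.
    move=> h Hh; rewrite -[x in path _ x]negcK; apply: path_negc; exact: Hr (HH h Hh).
  by rewrite -[x in last x]negcK last_map Hl negc_cst.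
split => // h Hh.
case: (He _ (HH h Hh)) => Heq [_ Hst].
have Heq' : equilibria W h = [set cst V false].
  apply/setP => x; rewrite in_set1.
  have -> : (x \in equilibria W h) = (negc x \in equilibria W (fun j => - h j)).
    by apply/idP/idP => /equilP H; apply/equilP => i; move: (H i); rewrite util_negc.
  rewrite Heq in_set1; apply/eqP/eqP => H.
    by rewrite -[x]negcK H negc_cst.
  by rewrite H negc_cst.
split => //; split.
  move=> x; case: (Hpaths x) => s [Hr Hl]; exists s; split; last by rewrite Hl inE.
  exact: (sub_path (@I_BR h) (Hr h Hh)).
move=> y s; rewrite in_set1 => /eqP -> /BRpath_negc Hpa.
have Hin : negc (cst V false) \in [set cst V true] by rewrite negc_cst in_set1.
have := Hst _ _ Hin Hpa; rewrite last_map in_set1 => /eqP H.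
by rewrite in_set1; apply/eqP; rewrite -[last _ _]negcK H negc_cst.
Qed.
End Aux.

Theorem theorem4 (R : realFieldType) (V : finType) (W : V -> V -> R)
  (hm hp : V -> R) :
  is_network W ->
  (forall i, hm i <= hp i) ->
  robustly_indecomposable W hm hp ->
  (* (i) *)
  ((forall x : config V, exists s, (size s <= #|V|)%N /\
       robust_Ipath W hm hp x s /\ last x s \in pm1 V) /\
   (forall h, inH hm hp h -> globally_reachable (Istep W h) (pm1 V))) /\
  (* (ii) *)
  ((forall i, hp i <= wdeg W i) -> (forall i, - hm i <= wdeg W i) ->
   forall h, inH hm hp h ->
     equilibria W h = pm1 V /\ globally_stable (Istep W h) (pm1 V)) /\
  (* (iii) ; hma = h^{-a} *)
  (forall a : bool, let hma := if a then hm else hp in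
   (forall i, - (act R a * hma i) <= wdeg W i) ->
   (exists i, wdeg W i < act R a * hma i) ->
   (forall x : config V, exists s,
       robust_Ipath W hm hp x s /\ last x s = cst V a) /\
   (forall h, inH hm hp h ->
     equilibria W h = [set cst V a] /\
     globally_stable (BRstep W h) [set cst V a])).
Proof.
move=> HW Hhm Hri.
split; first split.
- exact: (part1 HW Hhm Hri).
- move=> h Hh x; case: (part1 HW Hhm Hri x) => s [_ [Hr Hl]]; exists s; split => //.
  exact: Hr.
split.
- move=> Hw1 Hw2; exact: (part2 HW Hhm Hri Hw1 Hw2).
- move=> a; case: a => /= Hw Hk.
  + apply: (part3T HW Hhm Hri).
      by move=> i; have := Hw i; rewrite /act mul1r.
    by case: Hk => k; rewrite /act mul1r => ?; exists k.
  + apply: (part3F HW Hhm Hri).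
      by move=> i; have := Hw i; rewrite /act mulN1r opprK.
    by case: Hk => k; rewrite /act mulN1r => ?; exists k.
Qed.
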